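(* Let $G=(V,E,w)$ be an undirected graph with positive real edge weights, $s\in V$, let $T$ be a shortest-path tree of $G$ rooted at $s$ and $w'$ as in the context. Let $F\subseteq E$, let $t\in V$ be reachable from $s$ in $G-F$, let $\pi$ be a shortest path from $s$ to $t$ in $G-F$, and let $N$ be the set of new edges of $\pi$. Then for every $e\in N$, $w'(e)\le 2\,d_{G-F}(t)$.
   Context: For a subgraph $X$ of $G$, $d_X(u)$ denotes the distance from $s$ to $u$ in $X$ with respect to $w$. Define $w'(u,v)=0$ if $(u,v)\in E(T)$ and $w'(u,v)=d_T(u)+w(u,v)+d_T(v)$ otherwise. $G-F$ and $T-F$ denote $G$ and $T$ with the edges of $F$ removed. An edge is called new if its endpoints lie in different connected components of the forest $T-F$. *)

(* Defs.v *)
From HB Require Import structures.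
From mathcomp Require Import all_boot all_order all_algebra.
From mathcomp Require Import boolp classical_sets reals constructive_ereal ereal.

Set Implicit Arguments. Unset Strict Implicit. Unset Printing Implicit Defensive.
Import Order.TTheory GRing.Theory Num.Theory.
Local Open Scope ring_scope.

(* An undirected simple graph on the vertex set V is given by its edge set
   X : {set {set V}} (each edge is a 2-element set {u, v}); edge weights are a
   function w : {set V} -> R.  Subgraphs (T, G - F, T - F) are edge subsets
   on the same vertex set. *)

Section Graphs.
Variables (R : realType) (V : finType).

Definition edge (x y : V) : {set V} := finset.setU (finset.set1 x) (finset.set1 y).

Definition adj (X : {set {set V}}) : rel V := fun x y => edge x y \in X.

(* p is a walk in X from a to b (vertex sequence a :: p) *)
Definition walk (X : {set {set V}}) (a : V) (p : seq V) (b : V) : bool :=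
  path (adj X) a p && (last a p == b).

Definition walk_len (w : {set V} -> R) (a : V) (p : seq V) : R :=
  \sum_(x <- pairmap (fun x y => w (edge x y)) a p) x.

Definition connected (X : {set {set V}}) (a b : V) : Prop :=
  exists p, walk X a p b.

(* d_X(u): distance from s to u in X w.r.t. w (+oo if unreachable) *)
Definition dist (X : {set {set V}}) (w : {set V} -> R) (s u : V) : \bar R :=
  ereal_inf [set (walk_len w s p)%:E | p in [set p | walk X s p u]]%classic.

Definition acyclic (T : {set {set V}}) : Prop :=
  forall (a b : V), a != b -> edge a b \in T ->
    ~ connected (T :\ edge a b) a b.

Definition is_spt (E : {set {set V}}) (w : {set V} -> R) (s : V)
    (T : {set {set V}}) : Prop :=
  [/\ T \subset E, acyclic T,
      (forall e, e \in T -> forall v, v \in e -> connected T s v)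
    & (forall v, dist T w s v = dist E w s v)].

Definition wprime (T : {set {set V}}) (w : {set V} -> R) (s u v : V) : \bar R :=
  if edge u v \in T then 0%E
  else (dist T w s u + (w (edge u v))%:E + dist T w s v)%E.

Definition new_edge (T F : {set {set V}}) (u v : V) : Prop :=
  ~ connected (T :\: F) u v.

End Graphs.

(* Main.v *)
Require Import Defs.
From HB Require Import structures.
From mathcomp Require Import all_boot all_order all_algebra.
From mathcomp Require Import reals constructive_ereal.
From mathcomp Require Import lra.
From mathcomp Require boolp classical_sets ereal.
Import Order.TTheory GRing.Theory Num.Theory.
Local Open Scope ring_scope.

Lemma zip_split (T : eqType) (u v : T) (p : seq T) (a : T) :
  (u, v) \in zip (a :: p) p ->
  exists p1 p2, p = p1 ++ v :: p2 /\ last a p1 = u.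
Proof.
elim: p a => [|x p IH] a //=.
rewrite in_cons => /orP [/eqP [-> ->]|H].
  by exists [::], p.
have [p1 [p2 [-> Hl]]] := IH x H.
by exists (x :: p1), p2.
Qed.

Lemma aux_ineq (R : realFieldType) (A B C : R) : 0 <= C ->
  A + B + (A + B) <= 2 * (A + B + C).
Proof. move=> HC; lra. Qed.

Arguments zip_split {T u v p a}.

Lemma walk_len_cat (R : realType) (V : finType) (w : {set V} -> R) a p1 p2 :
  walk_len w a (p1 ++ p2) = walk_len w a p1 + walk_len w (last a p1) p2.
Proof. by rewrite /walk_len pairmap_cat big_cat. Qed.

Lemma walk_len_ge0 (R : realType) (V : finType) (E X : {set {set V}})
  (w : {set V} -> R) a p :
  (forall e, e \in E -> 0 < w e) -> X \subset E -> path (adj X) a p ->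
  0 <= walk_len w a p.
Proof.
move=> Hw HX; elim: p a => [|x p IH] a /=.
  by rewrite /walk_len big_nil.
move=> /andP [Hax Hp].
rewrite /walk_len /= big_cons.
apply: addr_ge0; last exact: IH.
have He : edge a x \in E by exact: (subsetP HX _ Hax).
  exact: ltW (Hw _ He).
Qed.

Arguments walk_len_ge0 {R V E X w a p}.

Lemma dist_le (R : realType) (V : finType) (E X : {set {set V}})
  (w : {set V} -> R) s p u :
  X \subset E -> walk X s p u -> (dist E w s u <= (walk_len w s p)%:E)%E.
Proof.
move=> HX /andP [Hp Hl].
apply: ereal.ge_ereal_inf; exists (walk_len w s p)%:E => //.
exists p => //; apply/andP; split => //.
apply: sub_path Hp => x y; rewrite /adj => Hxy; exact: (subsetP HX _ Hxy).
Qed.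

Arguments dist_le {R V E X w s p u}.

Theorem lemma4 (R : realType) (V : finType) (E : {set {set V}})
    (w : {set V} -> R) (s : V) (T F : {set {set V}}) (t : V) (pi : seq V) :
  (forall e, e \in E -> #|e| = 2%N) ->
  (forall e, e \in E -> 0 < w e) ->
  is_spt E w s T ->
  F \subset E ->
  connected (E :\: F) s t ->
  walk (E :\: F) s pi t ->
  (walk_len w s pi)%:E = dist (E :\: F) w s t ->
  forall u v, (u, v) \in zip (s :: pi) pi -> new_edge T F u v ->
  (wprime T w s u v <= 2%:E * dist (E :\: F) w s t)%E.
Proof.
move=> _ Hw [_ _ _ HT] _ _ Hwalk Hopt u v Huv _.
rewrite -Hopt.
have HX : E :\: F \subset E by apply: subsetDl.
have [p1 [p2 [Hpi Hl]]] := zip_split Huv.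
move: Hwalk; rewrite /walk Hpi cat_path /= => /andP [/andP [Hp1 /andP [Huv' Hp2]] Hlast].
rewrite Hl in Huv'.
have Hwe : 0 < w (edge u v) by apply: Hw; exact: (subsetP HX _ Huv').
have H2 : 0 <= walk_len w v p2 by apply: (walk_len_ge0 Hw HX Hp2).
have HL : walk_len w s (p1 ++ v :: p2) = walk_len w s p1 + w (edge u v) + walk_len w v p2.
  rewrite walk_len_cat Hl /walk_len /= big_cons addrA //.
have H1 : 0 <= walk_len w s p1 by apply: (walk_len_ge0 Hw HX Hp1).
rewrite /wprime; case: ifP => _.
  rewrite -EFinM lee_fin HL; apply: mulr_ge0 => //.
  by apply: addr_ge0 => //; apply: addr_ge0 => //; apply: ltW.
rewrite !HT.
have Du : (dist E w s u <= (walk_len w s p1)%:E)%E.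
  by apply: (dist_le HX); rewrite /walk Hp1 Hl eqxx.
have Dv : (dist E w s v <= (walk_len w s p1 + w (edge u v))%:E)%E.
  have -> : walk_len w s p1 + w (edge u v) = walk_len w s (rcons p1 v).
    by rewrite -cats1 walk_len_cat Hl /walk_len /= big_cons big_nil addr0.
  apply: (dist_le HX); rewrite /walk last_rcons eqxx andbT rcons_path Hp1 /= Hl.
  exact: Huv'.
apply: (le_trans (leeD (leeD Du (lexx _)) Dv)).
rewrite -!EFinD -EFinM lee_fin HL.
exact: aux_ineq.
Qed.
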